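(* Let $k\ge 1$ and $d\ge 0$ be integers and let $F_1,F_2$ be permutations (bijections, not necessarily linear) of $\mathbb{F}_2^k$. Then $(F_1,F_2)$ is a Correlation Immune Pair of strength $d$ if and only if the binary code $$C(F_1,F_2)=\{(x+y,\,F_1(x),\,F_2(y)) : x,y\in\mathbb{F}_2^k\}\subseteq \mathbb{F}_2^{3k},$$ which has $2^{2k}$ elements, has dual distance at least $d+1$.
   Context: For $a,x\in\mathbb{F}_2^k$, $a\cdot x$ is the usual scalar product and $w_H$ denotes Hamming weight. For a map $F:\mathbb{F}_2^k\to\mathbb{F}_2^k$ and $b\in\mathbb{F}_2^k$, let $b\cdot F$ be the Boolean function $x\mapsto b\cdot F(x)$, and define its Fourier transform at $a\in\mathbb{F}_2^k$ by $\widehat{b\cdot F}(a)=\sum_{x\in\mathbb{F}_2^k,\ b\cdot F(x)=1}(-1)^{a\cdot x}$ (an integer). A pair $(F_1,F_2)$ of permutations of $\mathbb{F}_2^k$ is a Correlation Immune Pair (CIP) of strength $d$ if for every $(a,b,c)\in(\mathbb{F}_2^k)^3$ with $a\neq 0$ and $w_H(a)+w_H(b)+w_H(c)\le d$, one has $\widehat{b\cdot F_1}(a)=0$ or $\widehat{c\cdot F_2}(a)=0$. For a (possibly nonlinear) binary code $C$ of length $n$, its distance distribution is $B_i=\frac{1}{|C|}|\{(x,y)\in C\times C: d_H(x,y)=i\}|$, $0\le i\le n$, with distance enumerator $D_C(X,Y)=\sum_i B_iX^{n-i}Y^i$; the dual distance distribution $(B_i^\perp)$ is defined by $\sum_i B_i^\perp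 X^{n-i}Y^i=\frac{1}{|C|}D_C(X+Y,X-Y)$, and the dual distance of $C$ is the smallest $i>0$ with $B_i^\perp\neq 0$ (taken to be $+\infty$ if there is none). *)

(* Defs.v *)
From HB Require Import structures.
From mathcomp Require Import all_boot all_order all_algebra all_fingroup.
Set Implicit Arguments. Unset Strict Implicit. Unset Printing Implicit Defensive.
Import Order.TTheory GRing.Theory Num.Theory.
Local Open Scope ring_scope.

Notation vec k := 'rV['F_2]_k.

Definition dotv k (a x : vec k) : 'F_2 := \sum_(i < k) a 0 i * x 0 i.

Definition wH n (a : vec n) : nat := #|[set i : 'I_n | a 0 i != 0]|.

Definition dH n (x y : vec n) : nat := wH (x - y).

Definition fourier k (F : vec k -> vec k) (b a : vec k) : int :=
  \sum_(x : vec k | dotv b (F x) == 1) (if dotv a x == 0 then 1 else -1).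

Definition CIP k (F1 F2 : vec k -> vec k) (d : nat) : Prop :=
  forall a b c : vec k, a != 0 -> (wH a + wH b + wH c <= d)%N ->
    fourier F1 b a = 0 \/ fourier F2 c a = 0.

Definition distB n (C : {set vec n}) (i : nat) : rat :=
  #|[set p : vec n * vec n | (p.1 \in C) && (p.2 \in C) && (dH p.1 p.2 == i)]|%:R
    / #|C|%:R.

(* D_C(X+Y, X-Y) as a bivariate polynomial in {poly {poly rat}}:
   the inner variable is X (written 'X%:P), the outer variable is Y ('X). *)
Definition distEnum_transformed n (C : {set vec n}) : {poly {poly rat}} :=
  \sum_(i < n.+1) (distB C i)%:P%:P *
     ('X%:P + 'X) ^+ (n - i) * ('X%:P - 'X) ^+ i.

(* dual distance distribution: B^perp_i is (1/|C|) times the coefficient of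
   X^(n-i) Y^i in D_C(X+Y, X-Y) *)
Definition dualB n (C : {set vec n}) (i : nat) : rat :=
  ((distEnum_transformed C)`_i)`_(n - i) / #|C|%:R.

(* "dual distance >= m": no i with 0 < i < m has B^perp_i <> 0
   (covers the case dual distance = +oo) *)
Definition dual_dist_ge n (C : {set vec n}) (m : nat) : Prop :=
  forall i : nat, (0 < i)%N -> (i < m)%N -> dualB C i = 0.

Definition codeC k (F1 F2 : vec k -> vec k) : {set vec (k + k + k)} :=
  [set row_mx (row_mx (x + y) (F1 x)) (F2 y) | x : vec k, y : vec k].

(* Main.v *)
Require Import Defs.
From HB Require Import structures.
From mathcomp Require Import all_boot all_order all_algebra all_fingroup.
From mathcomp Require Import ring.
Set Implicit Arguments. Unset Strict Implicit. Unset Printing Implicit Defensive.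
Import Order.TTheory GRing.Theory Num.Theory.
Local Open Scope ring_scope.

Lemma F2cases (z : 'F_2) : z = 0 \/ z = 1.
Proof. case: z => [[|[|n]] H]; [left|right|]; try by apply/val_inj. by []. Qed.

Lemma F2neq0 (z : 'F_2) : z != 0 -> z = 1.
Proof. by case: (F2cases z) => ->. Qed.

Definition sgn (R : pzRingType) (z : 'F_2) : R := if z == 0 then 1 else -1.

Lemma sgn0 (R : pzRingType) : sgn R 0 = 1.
Proof. by rewrite /sgn eqxx. Qed.

Lemma sgn1 (R : pzRingType) : sgn R 1 = -1.
Proof. by rewrite /sgn. Qed.

Lemma sgnD (R : pzRingType) (x y : 'F_2) : sgn R (x + y) = sgn R x * sgn R y.
Proof.
case: (F2cases x) => ->; case: (F2cases y) => ->;
rewrite ?addr0 ?add0r ?sgn0 ?sgn1 ?mul1r ?mulr1 //.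
have -> : (1 + 1 : 'F_2) = 0 by apply/val_inj.
by rewrite sgn0 mulrNN mulr1.
Qed.

Lemma sgnN (R : pzRingType) (x : 'F_2) : sgn R (- x) = sgn R x.
Proof.
case: (F2cases x) => ->; rewrite ?oppr0 //.
Qed.

Lemma sgnB (R : pzRingType) (x y : 'F_2) : sgn R (x - y) = sgn R x * sgn R y.
Proof. by rewrite sgnD sgnN. Qed.

Lemma sgn_sum (R : pzRingType) (I : finType) (F : I -> 'F_2) :
  sgn R (\sum_i F i) = \prod_i sgn R (F i).
Proof. apply: (big_morph _ (@sgnD R)); exact: sgn0. Qed.

Lemma sgn_morph (R S : pzRingType) (f : {rmorphism R -> S}) z : f (sgn R z) = sgn S z.
Proof. by rewrite /sgn; case: ifP => _; rewrite ?rmorph1 ?rmorphN1. Qed.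
Lemma dotvDr k (a x y : vec k) : dotv a (x + y) = dotv a x + dotv a y.
Proof. by rewrite /dotv -big_split /=; apply: eq_bigr => i _; rewrite mxE mulrDr. Qed.

Lemma dotvNr k (a x : vec k) : dotv a (- x) = - dotv a x.
Proof. by rewrite /dotv -sumrN; apply: eq_bigr => i _; rewrite mxE mulrN. Qed.

Lemma dotvBr k (a x y : vec k) : dotv a (x - y) = dotv a x - dotv a y.
Proof. by rewrite dotvDr dotvNr. Qed.

Lemma dotv_row m n (a1 x1 : vec m) (a2 x2 : vec n) :
  dotv (row_mx a1 a2) (row_mx x1 x2) = dotv a1 x1 + dotv a2 x2.
Proof.
by rewrite /dotv big_split_ord /=; congr (_ + _); apply: eq_bigr => i _;
  rewrite ?row_mxEl ?row_mxEr.
Qed.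

Lemma wHE n (a : vec n) : wH a = (\sum_(i < n) (a ord0 i != 0%R))%N.
Proof.
rewrite /wH -sum1_card big_mkcond /=; apply: eq_bigr => i _.
by rewrite inE; case: (a 0 i != 0).
Qed.

Lemma wH_row m n (a : vec m) (b : vec n) : wH (row_mx a b) = (wH a + wH b)%N.
Proof.
by rewrite !wHE big_split_ord /=; congr (_ + _)%N; apply: eq_bigr => i _;
  rewrite ?row_mxEl ?row_mxEr.
Qed.

Lemma wH_le n (a : vec n) : (wH a <= n)%N.
Proof. by apply: leq_trans (max_card _) _; rewrite card_ord. Qed.

Lemma wH_eq0 n (a : vec n) : (wH a == 0%N) = (a == 0).
Proof.
rewrite /wH cards_eq0; apply/eqP/eqP => [H|->].
  apply/rowP => i; rewrite mxE.
  apply/eqP; apply: contraT => Hi.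
  have : i \in [set i | a 0 i != 0] by rewrite inE.
  by rewrite H inE.
by apply/setP => i; rewrite !inE mxE eqxx.
Qed.

Lemma dotv_delta n (a : vec n) i : dotv a (delta_mx ord0 i) = a 0 i.
Proof.
rewrite /dotv (bigD1 i) //= big1 ?addr0; first by rewrite mxE !eqxx mulr1.
by move=> j Hj; rewrite mxE (negbTE Hj) andbF mulr0.
Qed.

Lemma char_sum n (a : vec n) : a != 0 -> \sum_(x : vec n) sgn rat (dotv a x) = 0.
Proof.
move=> Ha.
have [i Hi] : exists i, a 0 i != 0.
  apply/existsP; apply: contraR Ha => /existsPn H; apply/eqP/rowP => i.
  by rewrite mxE; apply/eqP; move: (H i); rewrite negbK.
have He : dotv a (delta_mx ord0 i) = 1.
  by rewrite (dotv_delta a i); exact: F2neq0.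
set e := delta_mx ord0 i : vec n.
move: He; rewrite -/e => He.
set S := \sum_x _.
have HS : S = - S.
  transitivity (\sum_x sgn rat (dotv a (e + x))).
    by rewrite /S (reindex_inj (addrI e)).
  rewrite /S -sumrN; apply: eq_bigr => x _.
  by rewrite dotvDr sgnD He sgn1 mulN1r.
have : S *+ 2 = 0 by rewrite mulr2n {1}HS addNr.
by move/eqP; rewrite mulrn_eq0 /= => /eqP.
Qed.

Notation PP := {poly {poly rat}}.

Lemma prod_const_pred (R : pzSemiRingType) n (P : pred 'I_n) (c : R) :
  \prod_(i | P i) c = c ^+ #|[set i | P i]|.
Proof. by rewrite -prodr_const; apply: eq_bigl => i; rewrite inE. Qed.

Lemma card_zeros n (v : vec n) : #|[set i | v 0 i == 0]| = (n - wH v)%N.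
Proof.
have H : (#|[set i | v 0%R i == 0%R]| + wH v)%N = n.
  rewrite /wH -[RHS](card_ord n) -(cardsC [set i | v 0 i != 0]) addnC; congr (_ + _)%N.
  by apply: eq_card => i; rewrite !inE negbK.
by apply/eqP; rewrite -(eqn_add2r (wH v)) H subnK // wH_le.
Qed.

Lemma sumF2 (R : nmodType) (F : 'F_2 -> R) : \sum_(j : 'F_2) F j = F 0 + F 1.
Proof.
rewrite big_ord_recl big_ord_recl big_ord0 addr0.
by congr (F _ + F _); apply/val_inj.
Qed.

Lemma krawt n (v : vec n) :
 ('X%:P + 'X) ^+ (n - wH v) * ('X%:P - 'X) ^+ wH v
 = \sum_(u : vec n) sgn PP (dotv u v) * ('X%:P ^+ (n - wH u) * 'X ^+ wH u) :> PP.
Proof.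
pose G (i : 'I_n) (j : 'F_2) : PP := sgn PP (j * v 0 i) * (if j == 0 then 'X%:P else 'X).
have E1 : ('X%:P + 'X) ^+ (n - wH v) * ('X%:P - 'X) ^+ wH v
          = \prod_(i < n) \sum_(j : 'F_2) G i j.
  rewrite (bigID (fun i => v 0 i == 0)) /=.
  rewrite (eq_bigr (fun _ => 'X%:P + 'X)); last first.
    by move=> i /eqP Hi; rewrite sumF2 /G mul0r mul1r Hi sgn0 /= !mul1r.
  rewrite [X in _ = _ * X](eq_bigr (fun _ => 'X%:P - 'X)); last first.
    move=> i Hi; rewrite sumF2 /G mul0r mul1r sgn0 /= mul1r.
    by rewrite /sgn (negbTE Hi) /= mulN1r.
  by rewrite !prod_const_pred card_zeros.
rewrite E1 bigA_distr_bigA /=.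
rewrite (reindex (fun u : vec n => [ffun i => u 0 i])) /=; last first.
  apply: onW_bij; exists (fun f : {ffun 'I_n -> 'F_2} => \row_i f i).
    by move=> u; apply/rowP => i; rewrite !mxE ffunE.
  by move=> f; apply/ffunP => i; rewrite ffunE mxE.
apply: eq_bigr => u _.
rewrite (eq_bigr (fun i => G i (u 0 i))); last by move=> i _; rewrite ffunE.
rewrite /G big_split /= -sgn_sum; congr (_ * _).
rewrite (bigID (fun i => u 0 i == 0)) /=.
rewrite (eq_bigr (fun _ => 'X%:P)); last by move=> i ->.
rewrite [X in _ * X](eq_bigr (fun _ => 'X)); last by move=> i /negbTE ->.
by rewrite !prod_const_pred card_zeros.
Qed.

Lemma coef_mono (c : rat) a w i j :
  ((c%:P%:P * ('X%:P ^+ a * 'X ^+ w) : PP)`_i)`_j = c * ((w == i) && (a == j))%:R.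
Proof.
rewrite mulrA -rmorphXn -polyCM coefMXn.
case: (ltnP i w) => Hiw.
  rewrite coef0; have -> : (w == i) = false by apply/negbTE; rewrite neq_ltn Hiw orbT.
  by rewrite mulr0.
rewrite coefC.
case: (eqVneq w i) => [->|Hne] /=.
  by rewrite subnn eqxx coefCM coefXn eq_sym.
have : (i - w != 0)%N by rewrite subn_eq0 -ltnNge ltn_neqAle Hne Hiw.
by move=> /negbTE ->; rewrite coef0 mulr0.
Qed.

Definition Ssum n (C : {set vec n}) (u : vec n) : rat := \sum_(c in C) sgn rat (dotv u c).

Lemma sgnPP z : sgn PP z = (sgn rat z)%:P%:P.
Proof. by rewrite !sgn_morph. Qed.

Lemma distEnum_eq n (C : {set vec n}) : #|C| != 0%N ->
  (#|C|%:R)%:P%:P * distEnum_transformed C =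
  \sum_(u : vec n) ((Ssum C u) ^+ 2)%:P%:P * ('X%:P ^+ (n - wH u) * 'X ^+ wH u).
Proof.
move=> HC.
pose P (i : nat) : PP := ('X%:P + 'X) ^+ (n - i) * ('X%:P - 'X) ^+ i.
have E1 : (#|C|%:R)%:P%:P * distEnum_transformed C =
    \sum_(i < n.+1) \sum_(p | (p.1 \in C) && (p.2 \in C) && (dH p.1 p.2 == i)) P i.
  rewrite /distEnum_transformed mulr_sumr; apply: eq_bigr => i _.
  rewrite !mulrA -!polyCM /distB [X in X%:P%:P]mulrC divfK ?pnatr_eq0 //.
  rewrite -mulrA -/(P i) !rmorph_nat mulr_natl -sumr_const; apply: eq_bigl => p.
  by rewrite inE.
have E2 : \sum_(i < n.+1) \sum_(p | (p.1 \in C) && (p.2 \in C) && (dH p.1 p.2 == i)) P i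
    = \sum_(p | (p.1 \in C) && (p.2 \in C)) P (dH p.1 p.2).
  rewrite (partition_big (fun p : vec n * vec n => (inord (dH p.1 p.2) : 'I_n.+1)) xpredT) //=.
  apply: eq_bigr => i _; apply: eq_big => p.
    case: ((p.1 \in C) && (p.2 \in C)) => //=.
    apply/eqP/eqP => H.
      by apply/val_inj; rewrite /= inordK ?H // ltnS wH_le.
    by rewrite -H inordK // ltnS wH_le.
  by move=> /andP [_ /eqP ->].
rewrite E1 E2 -(pair_big_dep (fun c => c \in C) (fun _ c => c \in C) (fun c c' => P (dH c c'))) /=.
rewrite (eq_bigr (fun c => \sum_(c' in C) \sum_(u : vec n)
     (sgn PP (dotv u c) * sgn PP (dotv u c')) * ('X%:P ^+ (n - wH u) * 'X ^+ wH u))); last first.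
  move=> c _; apply: eq_bigr => c' _; rewrite /P /dH krawt; apply: eq_bigr => u _.
  by rewrite dotvBr sgnB.
rewrite (eq_bigr (fun c => \sum_(u : vec n) \sum_(c' in C)
     (sgn PP (dotv u c) * sgn PP (dotv u c')) * ('X%:P ^+ (n - wH u) * 'X ^+ wH u))); last first.
  by move=> c _; rewrite exchange_big.
rewrite exchange_big /=; apply: eq_bigr => u _.
under eq_bigr => c _ do rewrite -mulr_suml.
rewrite -mulr_suml; congr (_ * _).
rewrite /Ssum expr2 !rmorphM !rmorph_sum /= big_distrl /=; apply: eq_bigr => c _.
rewrite big_distrr /=; apply: eq_bigr => c' _.
by rewrite !sgnPP.
Qed.

Lemma dualB_zero n (C : {set vec n}) i : #|C| != 0%N ->
  (dualB C i = 0 <-> forall u : vec n, wH u = i -> Ssum C u = 0).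
Proof.
move=> HC.
have HC' : (#|C|%:R : rat) != 0 by rewrite pnatr_eq0.
have E : #|C|%:R * ((distEnum_transformed C)`_i)`_(n - i) =
         \sum_(u : vec n | wH u == i) Ssum C u ^+ 2.
  rewrite -coefCM -coefCM distEnum_eq // !coef_sum.
  rewrite [RHS]big_mkcond /=; apply: eq_bigr => u _; rewrite coef_mono.
  by case: eqVneq => [->|_] /=; rewrite ?eqxx ?mulr1 ?mulr0.
have Hd : dualB C i = (\sum_(u : vec n | wH u == i) Ssum C u ^+ 2) / #|C|%:R ^+ 2.
  rewrite -E /dualB; field; exact: HC'.
rewrite Hd; split.
  move=> /eqP; rewrite mulf_eq0 invr_eq0 expf_eq0 (negbTE HC') andbF orbF.
  rewrite psumr_eq0; last by move=> u _; exact: sqr_ge0.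
  move=> /allP H u Hu; apply/eqP; rewrite -sqrf_eq0.
  by have := H u (mem_index_enum u); rewrite Hu eqxx.
move=> H; rewrite big1 ?mul0r // => u /eqP Hu.
by rewrite H // expr0n.
Qed.

Definition W k (F : vec k -> vec k) (a b : vec k) : rat :=
  \sum_(x : vec k) sgn rat (dotv a x + dotv b (F x)).

Lemma dotv0l k (x : vec k) : dotv 0 x = 0.
Proof. by rewrite /dotv big1 // => i _; rewrite mxE mul0r. Qed.

Lemma W0 k (F : {perm vec k}) (b : vec k) : b != 0 -> W F 0 b = 0.
Proof.
move=> Hb; rewrite /W.
under eq_bigr => x _ do rewrite dotv0l add0r.
rewrite -[RHS](char_sum Hb); symmetry.
exact: (reindex_inj (@perm_inj _ F)).
Qed.

Lemma W_fourier k (F : vec k -> vec k) (a b : vec k) : a != 0 ->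
  W F a b = - 2 * (fourier F b a)%:~R.
Proof.
move=> Ha.
have -> : W F a b = \sum_(x : vec k) sgn rat (dotv a x)
      - 2 * \sum_(x : vec k | dotv b (F x) == 1) sgn rat (dotv a x).
  rewrite [X in _ - 2 * X]big_mkcond mulr_sumr /= -sumrB; apply: eq_bigr => x _.
  rewrite sgnD; case: (F2cases (dotv b (F x))) => ->; rewrite ?sgn0 ?sgn1 /=.
    by rewrite mulr1 mulr0 subr0.
  by ring.
rewrite char_sum // sub0r /fourier rmorph_sum mulNr; congr (- (_ * _)).
by apply: eq_bigr => x _; rewrite /sgn; case: (_ == 0).
Qed.

Definition cw k (F1 F2 : vec k -> vec k) (p : vec k * vec k) : vec (k + k + k) :=
  row_mx (row_mx (p.1 + p.2) (F1 p.1)) (F2 p.2).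

Lemma codeCE k (F1 F2 : vec k -> vec k) : codeC F1 F2 = [set cw F1 F2 p | p : vec k * vec k].
Proof.
apply/setP => w; apply/imset2P/imsetP => [[x y _ _ ->]|[p _ ->]].
  by exists (x, y).
by exists p.1 p.2.
Qed.

Lemma cw_inj k (F1 F2 : {perm vec k}) : injective (cw F1 F2).
Proof.
move=> [x y] [x' y'] /eq_row_mx [/eq_row_mx [E1 E2] E3] /=.
move: E1 E2 E3 => /= E1 E2 E3.
have Hx := perm_inj E2; rewrite -Hx in E1 *.
have Hy : y = y' by apply: (addrI x).
by rewrite Hy.
Qed.

Lemma codeC_card k (F1 F2 : {perm vec k}) : #|codeC F1 F2| != 0%N.
Proof.
rewrite cards_eq0; apply/set0Pn; exists (cw F1 F2 (0, 0)).
by rewrite codeCE; apply/imsetP; exists (0, 0).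
Qed.

Lemma Ssum_code k (F1 F2 : {perm vec k}) (a b c : vec k) :
  Ssum (codeC F1 F2) (row_mx (row_mx a b) c) = W F1 a b * W F2 a c.
Proof.
rewrite /Ssum codeCE big_imset /=; last by move=> p q _ _; apply: cw_inj.
rewrite /W big_distrlr /= pair_bigA /= (eq_bigl xpredT) //.
apply: eq_bigr => [[x y]] _.
rewrite /cw /= !dotv_row dotvDr -sgnD; congr sgn.
by rewrite -!addrA; congr (_ + _); rewrite addrCA.
Qed.

Lemma wH_gt0 n (a : vec n) : a != 0 -> (0 < wH a)%N.
Proof. by rewrite lt0n wH_eq0. Qed.

Theorem theorem1 (k d : nat) (F1 F2 : {perm 'rV['F_2]_k}) :
  (1 <= k)%N ->
  (CIP F1 F2 d <-> dual_dist_ge (codeC F1 F2) d.+1).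
Proof.
move=> _; have HC := codeC_card F1 F2.
split.
  move=> Hcip i Hi0 Hid; apply/(dualB_zero _ HC) => u Hu.
  set a := lsubmx (lsubmx u); set b := rsubmx (lsubmx u); set c := rsubmx u.
  have Hu' : u = row_mx (row_mx a b) c by rewrite /a /b /c !hsubmxK.
  have Hw : (wH a + wH b + wH c)%N = i by rewrite -Hu [in RHS]Hu' !wH_row.
  rewrite Hu' Ssum_code.
  case: (eqVneq a 0) => Ha.
    case: (eqVneq b 0) => Hb; last by rewrite Ha (W0 F1 Hb) mul0r.
    case: (eqVneq c 0) => Hc; last by rewrite Ha (W0 F2 Hc) mulr0.
    move: Hi0; rewrite -Hw Ha Hb Hc.
    have H0 : wH (0 : vec k) = 0%N by apply/eqP; rewrite wH_eq0.
    by rewrite !H0.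
  have Hle : (wH a + wH b + wH c <= d)%N by rewrite Hw -ltnS.
  by case: (Hcip a b c Ha Hle); rewrite !W_fourier // => ->; rewrite ?mulr0 ?mul0r.
move=> Hdual a b c Ha Hle.
set u := row_mx (row_mx a b) c : vec (k + k + k).
have Hwu : wH u = (wH a + wH b + wH c)%N by rewrite /u !wH_row.
have Hpos : (0 < wH u)%N.
  by rewrite Hwu; apply: leq_trans (wH_gt0 Ha) _; rewrite -addnA leq_addr.
have := Hdual (wH u) Hpos; rewrite Hwu ltnS => /(_ Hle).
move/(dualB_zero _ HC) => /(_ u Hwu).
rewrite /u Ssum_code !W_fourier // => /eqP.
rewrite mulf_eq0 !mulf_eq0 !intr_eq0 oppr_eq0 (_ : (2 : rat) == 0 = false) //.
by case/orP => /eqP ->; [left|right].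
Qed.
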